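(* Fix $\epsilon>0$ and define \[U_1:=\left\{(a,b)\in\bigl([0,1/2)\times[1/2,1)\bigr)\cup\bigl([1/2,1)\times[0,1/2)\bigr):\ a+b<\tfrac34\right\},\] \[U_2:=\left\{(a,b)\in[0,1/2)\times[0,1):\ \tfrac34+\epsilon<a+b<\tfrac54\right\},\] and $U:=U_1\cup U_2\subset\mathbb{R}^2$. Let $x,z\in U$ and let $y^*:=\frac{x+z}{2}$. Then $y^*\neq u+\xi$ for all $u\in U$ and all $\xi\in\{(1/2,1/2),(1/2,0),(0,1/2)\}$. *)

(* Defs.v *)
From Stdlib Require Import Reals.
Open Scope R_scope.

Definition pt := (R * R)%type.

Definition U1 (p : pt) : Prop :=
  let (a, b) := p in
  ((0 <= a < 1/2 /\ 1/2 <= b < 1) \/ (1/2 <= a < 1 /\ 0 <= b < 1/2))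
  /\ a + b < 3/4.

Definition U2 (eps : R) (p : pt) : Prop :=
  let (a, b) := p in
  (0 <= a < 1/2 /\ 0 <= b < 1) /\ 3/4 + eps < a + b < 5/4.

Definition U (eps : R) (p : pt) : Prop := U1 p \/ U2 eps p.

Definition ptadd (p q : pt) : pt := (fst p + fst q, snd p + snd q).
Definition midpoint (p q : pt) : pt := ((fst p + fst q) / 2, (snd p + snd q) / 2).

Definition Xi (xi : pt) : Prop :=
  xi = (1/2, 1/2) \/ xi = (1/2, 0) \/ xi = (0, 1/2).

(* Main.v *)
Require Import Defs.
From Stdlib Require Import Reals Lra.
Open Scope R_scope.

Theorem lemma4p5 (eps : R) (heps : 0 < eps) (x z : pt) :
  U eps x -> U eps z ->
  forall (u xi : pt), U eps u -> Xi xi -> midpoint x z <> ptadd u xi.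
Proof.
  destruct x as [x1 x2], z as [z1 z2].
  intros Hx Hz [u1 u2] xi Hu Hxi.
  unfold U, U1, U2 in *.
  destruct Hxi as [-> | [-> | ->]]; unfold midpoint, ptadd; simpl;
  intro E; injection E as E1 E2;
  destruct Hx as [[[Hx|Hx] Hx']|Hx]; destruct Hz as [[[Hz|Hz] Hz']|Hz];
  destruct Hu as [[[Hu|Hu] Hu']|Hu]; lra.
Qed.
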